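(* Let $\gamma_1,\gamma_2:[a,b]\to\mathrm{Sp}(H)$ be two positive paths. Then the pointwise product $\gamma(t):=\gamma_1(t)\gamma_2(t)$, $t\in[a,b]$, is a positive path.
   Context: $(H,\langle\cdot,\cdot\rangle)$ is a complex Hilbert space and $J\in\mathcal B(H)$ is a bounded injective operator with $J^*=-J$; $\omega(x,y):=\langle Jx,y\rangle$. $\mathrm{Sp}(H):=\{M\in\mathrm{GL}(H): M^*JM=J\}$ (bounded invertible $M$). A $C^1$ path $\gamma$ in $\mathrm{Sp}(H)$ defined on an interval is called positive if $\dot\gamma(t)\gamma(t)^{-1}\in K$ for every $t$, where $K:=\{A\in\mathcal B(H): -JA=A^*J \text{ and } -JA \text{ is positive definite}\}$. *)

(* Defs.v *)
From Stdlib Require Import Reals.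
Open Scope R_scope.

Definition C : Type := (R * R)%type.
Definition Cre (z : C) : R := fst z.
Definition Cim (z : C) : R := snd z.
Definition C0 : C := (0, 0).
Definition C1 : C := (1, 0).
Definition RtoC (r : R) : C := (r, 0).
Definition Cadd (z w : C) : C := (fst z + fst w, snd z + snd w).
Definition Cmul (z w : C) : C :=
  (fst z * fst w - snd z * snd w, fst z * snd w + snd z * fst w).
Definition Cconj (z : C) : C := (fst z, - snd z).

(* ---------- Complex Hilbert spaces ----------
   inner product linear in the first argument, conjugate-linear in the second. *)
Record ComplexHilbertSpace := {
  hcar :> Type;
  vzero : hcar;
  vadd : hcar -> hcar -> hcar;
  vopp : hcar -> hcar;
  vscal : C -> hcar -> hcar;
  inner : hcar -> hcar -> C;
  vadd_assoc : forall x y z, vadd x (vadd y z) = vadd (vadd x y) z;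
  vadd_comm : forall x y, vadd x y = vadd y x;
  vadd_zero : forall x, vadd x vzero = x;
  vadd_opp : forall x, vadd x (vopp x) = vzero;
  vscal_one : forall x, vscal C1 x = x;
  vscal_assoc : forall c d x, vscal c (vscal d x) = vscal (Cmul c d) x;
  vscal_addv : forall c x y, vscal c (vadd x y) = vadd (vscal c x) (vscal c y);
  vscal_adds : forall c d x, vscal (Cadd c d) x = vadd (vscal c x) (vscal d x);
  inner_add : forall x y z, inner (vadd x y) z = Cadd (inner x z) (inner y z);
  inner_scal : forall c x y, inner (vscal c x) y = Cmul c (inner x y);
  inner_conj : forall x y, inner y x = Cconj (inner x y);
  inner_pos : forall x, 0 <= Cre (inner x x);
  inner_def : forall x, inner x x = C0 -> x = vzero;
  hcomplete : forall u : nat -> hcar,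
    (forall eps, 0 < eps -> exists N, forall m n, (N <= m)%nat -> (N <= n)%nat ->
        sqrt (Cre (inner (vadd (u m) (vopp (u n))) (vadd (u m) (vopp (u n))))) < eps) ->
    exists l, forall eps, 0 < eps -> exists N, forall n, (N <= n)%nat ->
        sqrt (Cre (inner (vadd (u n) (vopp l)) (vadd (u n) (vopp l)))) < eps
}.

Section Ops.
Variable H : ComplexHilbertSpace.

Definition vsub (x y : H) : H := vadd H x (vopp H y).
Definition hnorm (x : H) : R := sqrt (Cre (inner H x x)).

Definition bounded_op (T : H -> H) : Prop :=
  (forall x y, T (vadd H x y) = vadd H (T x) (T y)) /\
  (forall c x, T (vscal H c x) = vscal H c (T x)) /\
  (exists k, forall x, hnorm (T x) <= k * hnorm x).

Definition is_inverse (M Minv : H -> H) : Prop :=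
  bounded_op Minv /\ (forall x, Minv (M x) = x) /\ (forall x, M (Minv x) = x).

Definition invertible_op (M : H -> H) : Prop :=
  bounded_op M /\ exists Minv, is_inverse M Minv.

(* J^* = -J, i.e. <x, J y> = <-J x, y> for all x y *)
Definition skew_adjoint (J : H -> H) : Prop :=
  forall x y, inner H x (J y) = inner H (vopp H (J x)) y.

(* Sp(H) = { M in GL(H) : M^* J M = J },  i.e. <J M x, M y> = <J x, y> *)
Definition in_Sp (J M : H -> H) : Prop :=
  invertible_op M /\ forall x y, inner H (J (M x)) (M y) = inner H (J x) y.

(* K = { A in B(H) : -JA = A^* J and -JA positive definite }.
   -JA = A^*J  unfolds to  <-J A x, y> = <J x, A y>  for all x y.
   positive definite: <-J A x, x> is real and > 0 for x <> 0. *)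
Definition in_K (J A : H -> H) : Prop :=
  bounded_op A /\
  (forall x y, inner H (vopp H (J (A x))) y = inner H (J x) (A y)) /\
  (forall x, x <> vzero H ->
     Cim (inner H (vopp H (J (A x))) x) = 0 /\
     0 < Cre (inner H (vopp H (J (A x))) x)).

(* D is the derivative of gamma on [a,b] in operator norm (one-sided at ends) *)
Definition op_deriv_on (a b : R) (gamma D : R -> H -> H) : Prop :=
  forall t, a <= t <= b -> forall eps, 0 < eps -> exists delta, 0 < delta /\
    forall h, h <> 0 -> Rabs h < delta -> a <= t + h <= b ->
      forall x, hnorm (vsub (vscal H (RtoC (/ h)) (vsub (gamma (t + h) x) (gamma t x)))
                            (D t x)) <= eps * hnorm x.

Definition op_continuous_on (a b : R) (D : R -> H -> H) : Prop :=
  forall t, a <= t <= b -> forall eps, 0 < eps -> exists delta, 0 < delta /\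
    forall s, a <= s <= b -> Rabs (s - t) < delta ->
      forall x, hnorm (vsub (D s x) (D t x)) <= eps * hnorm x.

Definition C1_Sp_path (J : H -> H) (a b : R) (gamma D : R -> H -> H) : Prop :=
  (forall t, a <= t <= b -> in_Sp J (gamma t)) /\
  (forall t, a <= t <= b -> bounded_op (D t)) /\
  op_deriv_on a b gamma D /\ op_continuous_on a b D.

Definition positive_path (J : H -> H) (a b : R) (gamma : R -> H -> H) : Prop :=
  exists D, C1_Sp_path J a b gamma D /\
    forall t, a <= t <= b -> forall Ginv, is_inverse (gamma t) Ginv ->
      in_K J (fun x => D t (Ginv x)).

End Ops.

(* Main.v *)
Require Import Defs.
From Stdlib Require Import Reals Lra Psatz FunctionalExtensionality.
Open Scope R_scope.

Section Alg.
Variable H : ComplexHilbertSpace.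
Local Notation add := (vadd H).
Local Notation opp := (vopp H).
Local Notation scal := (vscal H).
Local Notation zero := (vzero H).
Local Notation inn := (inner H).
Local Notation sub := (vsub H).
Local Notation nm := (hnorm H).

Lemma vadd0l x : add zero x = x.
Proof. rewrite vadd_comm; apply vadd_zero. Qed.

Lemma vadd_cancel_l x y z : add x y = add x z -> y = z.
Proof.
  intro E. rewrite <- (vadd0l y), <- (vadd0l z), <- (vadd_opp H x).
  rewrite (vadd_comm H x (opp x)), <- !vadd_assoc, E. reflexivity.
Qed.

Lemma opp_unique x y : add x y = zero -> y = opp x.
Proof. intro E. apply (vadd_cancel_l x). rewrite E, vadd_opp. reflexivity. Qed.

Lemma vopp_add x y : opp (add x y) = add (opp x) (opp y).
Proof.
  symmetry; apply opp_unique.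
  rewrite (vadd_comm H x y), <- vadd_assoc, (vadd_assoc H x), vadd_opp, vadd0l, vadd_opp.
  reflexivity.
Qed.

Lemma vscal0 x : scal Defs.C0 x = zero.
Proof.
  assert (E : scal Defs.C0 x = add (scal Defs.C0 x) (scal Defs.C0 x)).
  { rewrite <- vscal_adds. f_equal. unfold Cadd, Defs.C0; simpl; f_equal; ring. }
  symmetry. apply (vadd_cancel_l (scal Defs.C0 x)). rewrite vadd_zero. exact E.
Qed.

Lemma vscal_m1 x : scal (RtoC (-1)) x = opp x.
Proof.
  apply opp_unique. rewrite <- (vscal0 x).
  replace Defs.C0 with (Cadd Defs.C1 (RtoC (-1))) by (unfold Cadd, Defs.C1, RtoC, Defs.C0; simpl; f_equal; ring).
  rewrite vscal_adds, vscal_one. reflexivity.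
Qed.

Lemma vscal_zero c : scal c zero = zero.
Proof.
  rewrite <- (vscal0 zero), vscal_assoc. f_equal.
  destruct c; unfold Cmul, Defs.C0; simpl; f_equal; ring.
Qed.

Lemma vscal_opp c x : scal c (opp x) = opp (scal c x).
Proof.
  apply opp_unique. rewrite <- vscal_addv, vadd_opp. apply vscal_zero.
Qed.

Lemma vsub_split a b c : sub a c = add (sub a b) (sub b c).
Proof.
  unfold vsub. rewrite <- vadd_assoc, (vadd_assoc H (opp b)), (vadd_comm H (opp b) b),
    vadd_opp, vadd0l. reflexivity.
Qed.

Lemma vsub_addadd a b c d : sub (add a b) (add c d) = add (sub a c) (sub b d).
Proof.
  unfold vsub. rewrite vopp_add, <- !vadd_assoc. f_equal.
  rewrite !vadd_assoc. f_equal. apply vadd_comm.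
Qed.

Lemma vsubK a b : add (sub a b) b = a.
Proof. unfold vsub. rewrite <- vadd_assoc, (vadd_comm H (opp b)), vadd_opp, vadd_zero. reflexivity. Qed.

Lemma vsub_xx a : sub a a = zero.
Proof. apply vadd_opp. Qed.

Lemma vscal_sub c x y : scal c (sub x y) = sub (scal c x) (scal c y).
Proof. unfold vsub. rewrite vscal_addv, vscal_opp. reflexivity. Qed.

Lemma lin_zero T : bounded_op H T -> T zero = zero.
Proof.
  intros [Ha _]. symmetry. apply (vadd_cancel_l (T zero)).
  rewrite vadd_zero, <- Ha, vadd_zero. reflexivity.
Qed.

Lemma lin_opp T : bounded_op H T -> forall x, T (opp x) = opp (T x).
Proof.
  intros HT x. apply opp_unique. destruct HT as [Ha Hb].
  rewrite <- Ha, vadd_opp. apply lin_zero. split; auto.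
Qed.

Lemma lin_add T : bounded_op H T -> forall x y, T (add x y) = add (T x) (T y).
Proof. intros [Ha _]; auto. Qed.

Lemma lin_scal T : bounded_op H T -> forall c x, T (scal c x) = scal c (T x).
Proof. intros [_ [Hb _]]; auto. Qed.

Lemma lin_sub T : bounded_op H T -> forall x y, T (sub x y) = sub (T x) (T y).
Proof. intros HT x y. unfold vsub. rewrite lin_add, lin_opp by auto. reflexivity. Qed.

Lemma inner_add_r x y z : inn x (add y z) = Cadd (inn x y) (inn x z).
Proof.
  rewrite (inner_conj H (add y z) x), inner_add, (inner_conj H y x), (inner_conj H z x).
  unfold Cadd, Cconj; simpl; f_equal; ring.
Qed.

Lemma inner_opp_l x y : inn (opp x) y = Cmul (RtoC (-1)) (inn x y).
Proof. rewrite <- vscal_m1, inner_scal. reflexivity. Qed.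

Definition re x y := Cre (inn x y).

Lemma re_add_l x y z : re (add x y) z = re x z + re y z.
Proof. unfold re. rewrite inner_add. reflexivity. Qed.
Lemma re_add_r x y z : re x (add y z) = re x y + re x z.
Proof. unfold re. rewrite inner_add_r. reflexivity. Qed.
Lemma re_sym x y : re y x = re x y.
Proof. unfold re. rewrite inner_conj. reflexivity. Qed.
Lemma re_scal_l r x y : re (scal (RtoC r) x) y = r * re x y.
Proof. unfold re. rewrite inner_scal. unfold Cmul, RtoC, Cre; simpl. ring. Qed.
Lemma re_scal_r r x y : re x (scal (RtoC r) y) = r * re x y.
Proof. rewrite re_sym, re_scal_l, re_sym. reflexivity. Qed.
Lemma re_pos x : 0 <= re x x.
Proof. apply inner_pos. Qed.

Lemma nm_ge0 x : 0 <= nm x.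
Proof. apply sqrt_pos. Qed.

Lemma nm_sq x : nm x * nm x = re x x.
Proof. unfold hnorm. apply sqrt_sqrt. apply re_pos. Qed.

Lemma cs x y : re x y <= nm x * nm y.
Proof.
  set (A := re x x). set (B := re x y). set (Cc := re y y).
  assert (Q : forall t, 0 <= A + 2 * t * B + t * t * Cc).
  { intro t. pose proof (re_pos (add x (scal (RtoC t) y))) as P.
    rewrite !re_add_l, !re_add_r, !re_scal_l, !re_scal_r in P.
    rewrite (re_sym x y) in P. unfold A, B, Cc. nra. }
  assert (HA : 0 <= A) by apply re_pos. assert (HC : 0 <= Cc) by apply re_pos.
  assert (S : B * B <= A * Cc).
  { destruct (Rle_lt_or_eq_dec 0 Cc HC) as [Cp|C0'].
    - pose proof (Q (- B / Cc)) as Qt.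
      assert (E : A + 2 * (- B / Cc) * B + (- B / Cc) * (- B / Cc) * Cc = (A * Cc - B * B) / Cc)
        by (field; lra).
      rewrite E in Qt.
      assert (0 <= (A * Cc - B * B) / Cc * Cc) by (apply Rmult_le_pos; lra).
      replace ((A * Cc - B * B) / Cc * Cc) with (A * Cc - B * B) in H0 by (field; lra). lra.
    - rewrite <- C0'. destruct (Req_dec B 0) as [B0|B0].
      + rewrite B0; lra.
      + exfalso. pose proof (Q (- (A + 1) / (2 * B))) as Qt. rewrite <- C0' in Qt.
        replace (A + 2 * (- (A + 1) / (2 * B)) * B + - (A + 1) / (2 * B) * (- (A + 1) / (2 * B)) * 0)
          with (-1) in Qt by (field; auto). lra. }
  unfold hnorm. fold (re x x) (re y y). fold A Cc.
  rewrite <- sqrt_mult by auto.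
  destruct (Rle_or_lt B 0). { pose proof (sqrt_pos (A * Cc)); lra. }
  rewrite <- (sqrt_square B) by lra. apply sqrt_le_1_alt. exact S.
Qed.

Lemma nm_tri x y : nm (add x y) <= nm x + nm y.
Proof.
  assert (E : re (add x y) (add x y) <= (nm x + nm y) * (nm x + nm y)).
  { rewrite re_add_l, !re_add_r, (re_sym x y).
    pose proof (cs x y). rewrite <- (nm_sq x), <- (nm_sq y). nra. }
  unfold hnorm at 1. rewrite <- (sqrt_square (nm x + nm y)).
  - apply sqrt_le_1_alt. exact E.
  - pose proof (nm_ge0 x); pose proof (nm_ge0 y); lra.
Qed.

Lemma nm_scal r x : nm (scal (RtoC r) x) = Rabs r * nm x.
Proof.
  unfold hnorm. fold (re (scal (RtoC r) x) (scal (RtoC r) x)) (re x x).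
  rewrite re_scal_l, re_scal_r, <- Rmult_assoc, sqrt_mult_alt.
  - rewrite <- sqrt_Rsqr_abs. reflexivity.
  - apply Rle_0_sqr.
Qed.

Lemma nm_opp x : nm (opp x) = nm x.
Proof. rewrite <- vscal_m1, nm_scal, Rabs_left by lra. ring. Qed.

Lemma nm_zero : nm zero = 0.
Proof.
  rewrite <- (vscal0 zero). change Defs.C0 with (RtoC 0). rewrite nm_scal, Rabs_R0. ring.
Qed.

Lemma dist_tri a b c : nm (sub a c) <= nm (sub a b) + nm (sub b c).
Proof. rewrite (vsub_split a b c). apply nm_tri. Qed.

Lemma sub_addadd a b c d : nm (sub (add a b) (add c d)) <= nm (sub a c) + nm (sub b d).
Proof. rewrite vsub_addadd. apply nm_tri. Qed.

Lemma nm_le_sub a b : nm a <= nm (sub a b) + nm b.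
Proof. rewrite <- (vsubK a b) at 1. apply nm_tri. Qed.


Lemma bnd_pos T : bounded_op H T -> exists k, 0 <= k /\ forall x, nm (T x) <= k * nm x.
Proof.
  intros [_ [_ [k Hk]]]. exists (Rabs k). split; [apply Rabs_pos|].
  intro x. eapply Rle_trans; [apply Hk|]. apply Rmult_le_compat_r; [apply nm_ge0|apply Rle_abs].
Qed.

Lemma bounded_add T S : bounded_op H T -> bounded_op H S ->
  bounded_op H (fun x => add (T x) (S x)).
Proof.
  intros HT HS. split; [|split].
  - intros x y. rewrite (lin_add _ HT), (lin_add _ HS), <- !vadd_assoc. f_equal.
    rewrite !vadd_assoc. f_equal. apply vadd_comm.
  - intros c x. rewrite (lin_scal _ HT), (lin_scal _ HS), vscal_addv. reflexivity.
  - destruct (bnd_pos _ HT) as [k1 [_ H1]]. destruct (bnd_pos _ HS) as [k2 [_ H2]].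
    exists (k1 + k2). intro x. eapply Rle_trans; [apply nm_tri|].
    specialize (H1 x); specialize (H2 x); lra.
Qed.

Lemma bounded_comp T S : bounded_op H T -> bounded_op H S -> bounded_op H (fun x => T (S x)).
Proof.
  intros HT HS. split; [|split].
  - intros x y. rewrite (lin_add _ HS), (lin_add _ HT). reflexivity.
  - intros c x. rewrite (lin_scal _ HS), (lin_scal _ HT). reflexivity.
  - destruct (bnd_pos _ HT) as [k1 [P1 H1]]. destruct (bnd_pos _ HS) as [k2 [_ H2]].
    exists (k1 * k2). intro x. eapply Rle_trans; [apply H1|].
    specialize (H2 x). rewrite Rmult_assoc. apply Rmult_le_compat_l; auto.
Qed.

Lemma comp_close (A A' B B' : H -> H) ea eb ka kb :
  bounded_op H A' -> 0 <= ka -> (forall x, nm (A' x) <= ka * nm x) ->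
  (forall x, nm (B' x) <= kb * nm x) -> 0 <= ea ->
  (forall x, nm (sub (A x) (A' x)) <= ea * nm x) ->
  (forall x, nm (sub (B x) (B' x)) <= eb * nm x) ->
  forall x, nm (sub (A (B x)) (A' (B' x))) <= (ea * (kb + eb) + ka * eb) * nm x.
Proof.
  intros HA' Hka0 Hka Hkb Hea HA HB x.
  eapply Rle_trans; [apply (dist_tri _ (A' (B x)))|].
  rewrite <- (lin_sub _ HA').
  pose proof (HA (B x)) as E1. pose proof (Hka (sub (B x) (B' x))) as E2.
  pose proof (nm_le_sub (B x) (B' x)) as E3. pose proof (HB x) as E4. pose proof (Hkb x) as E5.
  pose proof (nm_ge0 x).
  assert (nm (B x) <= (kb + eb) * nm x) by lra.
  assert (ea * nm (B x) <= ea * ((kb + eb) * nm x)) by (apply Rmult_le_compat_l; auto).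
  assert (ka * nm (sub (B x) (B' x)) <= ka * (eb * nm x)) by (apply Rmult_le_compat_l; auto).
  nra.
Qed.

Lemma deriv_cont a b (g D : R -> H -> H) : op_deriv_on H a b g D ->
  (forall t, a <= t <= b -> bounded_op H (D t)) ->
  forall t, a <= t <= b -> forall eta, 0 < eta -> exists delta, 0 < delta /\
    forall s, a <= s <= b -> Rabs (s - t) < delta ->
      forall x, nm (sub (g s x) (g t x)) <= eta * nm x.
Proof.
  intros Dv Bd t Ht eta Heta.
  destruct (bnd_pos _ (Bd t Ht)) as [k [kp Hk]].
  destruct (Dv t Ht 1 Rlt_0_1) as [d [dp Hd]].
  exists (Rmin d (eta / (k + 1))). split.
  { apply Rmin_pos; [auto|apply Rdiv_lt_0_compat; lra]. }
  intros s Hs Hst x. pose proof (nm_ge0 x).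
  destruct (Req_dec s t) as [->|Hne].
  { rewrite vsub_xx, nm_zero. apply Rmult_le_pos; lra. }
  set (h := s - t) in *.
  assert (Hh0 : h <> 0) by (unfold h; lra).
  assert (Hhd : Rabs h < d) by (eapply Rlt_le_trans; [exact Hst|apply Rmin_l]).
  assert (Hhe : Rabs h < eta / (k + 1)) by (eapply Rlt_le_trans; [exact Hst|apply Rmin_r]).
  assert (Hth : a <= t + h <= b) by (unfold h; lra).
  specialize (Hd h Hh0 Hhd Hth x).
  replace (t + h) with s in Hd by (unfold h; ring).
  set (w := sub (g s x) (g t x)) in *.
  pose proof (nm_le_sub (scal (RtoC (/ h)) w) (D t x)) as E1.
  pose proof (Hk x) as E2. rewrite nm_scal in E1.
  assert (E : nm w = Rabs h * (Rabs (/ h) * nm w)).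
  { rewrite <- Rmult_assoc, <- Rabs_mult, Rinv_r, Rabs_R1 by auto; ring. }
  rewrite E.
  apply Rle_trans with (Rabs h * ((1 + k) * nm x)).
  { apply Rmult_le_compat_l; [apply Rabs_pos|lra]. }
  assert (Rabs h * (k + 1) <= eta).
  { apply Rlt_le. apply (Rmult_lt_compat_r (k + 1)) in Hhe; [|lra].
    replace (eta / (k + 1) * (k + 1)) with eta in Hhe by (field; lra). lra. }
  pose proof (Rabs_pos h). nra.
Qed.

Lemma prod_deriv a b (g1 g2 D1 D2 : R -> H -> H) :
  op_deriv_on H a b g1 D1 -> op_deriv_on H a b g2 D2 ->
  (forall t, a <= t <= b -> bounded_op H (g1 t) /\ bounded_op H (g2 t) /\
     bounded_op H (D1 t) /\ bounded_op H (D2 t)) ->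
  op_deriv_on H a b (fun t x => g1 t (g2 t x)) (fun t x => add (D1 t (g2 t x)) (g1 t (D2 t x))).
Proof.
  intros Dv1 Dv2 Bd t Ht eps Heps.
  destruct (Bd t Ht) as [B1 [B2 [BD1 BD2]]].
  destruct (bnd_pos _ B1) as [k1 [k1p Hk1]].
  destruct (bnd_pos _ B2) as [k2 [k2p Hk2]].
  destruct (bnd_pos _ BD1) as [kd1 [kd1p Hkd1]].
  set (M := k1 + k2 + kd1 + 1).
  set (eta := Rmin 1 (eps / M)).
  assert (Mp : 0 < M) by (unfold M; lra).
  assert (Heta : 0 < eta) by (apply Rmin_pos; [lra|apply Rdiv_lt_0_compat; lra]).
  assert (Heta1 : eta <= 1) by apply Rmin_l.
  assert (HetaM : eta * M <= eps).
  { apply Rle_trans with (eps / M * M). apply Rmult_le_compat_r; [lra|apply Rmin_r].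
    right; field; lra. }
  destruct (Dv1 t Ht eta Heta) as [d1 [d1p Hd1]].
  destruct (Dv2 t Ht eta Heta) as [d2 [d2p Hd2]].
  destruct (deriv_cont _ _ _ _ Dv2 (fun s Hs => proj2 (proj2 (proj2 (Bd s Hs)))) t Ht eta Heta)
    as [d3 [d3p Hd3]].
  exists (Rmin d1 (Rmin d2 d3)). split.
  { apply Rmin_pos; auto. apply Rmin_pos; auto. }
  intros h hn0 hd Hth x. cbv beta.
  assert (hd1 : Rabs h < d1) by (eapply Rlt_le_trans; [exact hd|apply Rmin_l]).
  assert (hd2 : Rabs h < d2) by (eapply Rlt_le_trans; [exact hd|]; eapply Rle_trans; [apply Rmin_r|apply Rmin_l]).
  assert (hd3 : Rabs (t + h - t) < d3).
  { replace (t + h - t) with h by ring. eapply Rlt_le_trans; [exact hd|]; eapply Rle_trans; [apply Rmin_r|apply Rmin_r]. }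
  pose proof (Hd1 h hn0 hd1 Hth (g2 (t + h) x)) as E1.
  pose proof (Hd2 h hn0 hd2 Hth x) as E2.
  pose proof (Hd3 (t + h) Hth hd3 x) as E3.
  set (y := g2 (t + h) x) in *. set (z := g2 t x) in *. set (s := RtoC (/ h)) in *.
  rewrite (vsub_split (g1 (t + h) y) (g1 t y) (g1 t z)), vscal_addv.
  eapply Rle_trans; [apply sub_addadd|].
  rewrite <- (lin_sub _ B1 y z), <- (lin_scal _ B1), <- (lin_sub _ B1).
  pose proof (dist_tri (scal s (sub (g1 (t + h) y) (g1 t y))) (D1 t y) (D1 t z)) as E4.
  rewrite <- (lin_sub _ BD1) in E4.
  pose proof (Hkd1 (sub y z)) as E5.
  pose proof (Hk1 (sub (scal s (sub y z)) (D2 t x))) as E6.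
  pose proof (nm_le_sub y z) as E7. pose proof (Hk2 x) as E8. fold z in E8.
  pose proof (nm_ge0 x) as N.
  assert (Ny : nm y <= (eta + k2) * nm x) by lra.
  assert (eta * nm y <= eta * ((eta + k2) * nm x)) by (apply Rmult_le_compat_l; lra).
  assert (kd1 * nm (sub y z) <= kd1 * (eta * nm x)) by (apply Rmult_le_compat_l; lra).
  assert (k1 * nm (sub (scal s (sub y z)) (D2 t x)) <= k1 * (eta * nm x)) by (apply Rmult_le_compat_l; lra).
  assert (C : eta * (eta + k2) + kd1 * eta + k1 * eta <= eps) by (unfold M in HetaM; nra).
  assert ((eta * (eta + k2) + kd1 * eta + k1 * eta) * nm x <= eps * nm x) by (apply Rmult_le_compat_r; lra).
  nra.
Qed.

Lemma prod_cont a b (g1 g2 D1 D2 : R -> H -> H) :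
  op_deriv_on H a b g1 D1 -> op_deriv_on H a b g2 D2 ->
  op_continuous_on H a b D1 -> op_continuous_on H a b D2 ->
  (forall t, a <= t <= b -> bounded_op H (g1 t) /\ bounded_op H (g2 t) /\
     bounded_op H (D1 t) /\ bounded_op H (D2 t)) ->
  op_continuous_on H a b (fun t x => add (D1 t (g2 t x)) (g1 t (D2 t x))).
Proof.
  intros Dv1 Dv2 Ct1 Ct2 Bd t Ht eps Heps.
  destruct (Bd t Ht) as [B1 [B2 [BD1 BD2]]].
  destruct (bnd_pos _ B1) as [k1 [k1p Hk1]].
  destruct (bnd_pos _ B2) as [k2 [k2p Hk2]].
  destruct (bnd_pos _ BD1) as [kd1 [kd1p Hkd1]].
  destruct (bnd_pos _ BD2) as [kd2 [kd2p Hkd2]].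
  set (M := k1 + k2 + kd1 + kd2 + 2).
  set (eta := Rmin 1 (eps / M)).
  assert (Mp : 0 < M) by (unfold M; lra).
  assert (Heta : 0 < eta) by (apply Rmin_pos; [lra|apply Rdiv_lt_0_compat; lra]).
  assert (Heta1 : eta <= 1) by apply Rmin_l.
  assert (HetaM : eta * M <= eps).
  { apply Rle_trans with (eps / M * M). apply Rmult_le_compat_r; [lra|apply Rmin_r].
    right; field; lra. }
  destruct (Ct1 t Ht eta Heta) as [d1 [d1p Hd1]].
  destruct (Ct2 t Ht eta Heta) as [d2 [d2p Hd2]].
  destruct (deriv_cont _ _ _ _ Dv1 (fun s Hs => proj1 (proj2 (proj2 (Bd s Hs)))) t Ht eta Heta)
    as [d3 [d3p Hd3]].
  destruct (deriv_cont _ _ _ _ Dv2 (fun s Hs => proj2 (proj2 (proj2 (Bd s Hs)))) t Ht eta Heta)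
    as [d4 [d4p Hd4]].
  exists (Rmin (Rmin d1 d2) (Rmin d3 d4)). split.
  { repeat apply Rmin_pos; auto. }
  intros s Hs Hst x. cbv beta.
  assert (s1 : Rabs (s - t) < d1) by (eapply Rlt_le_trans; [exact Hst|]; eapply Rle_trans; apply Rmin_l).
  assert (s2 : Rabs (s - t) < d2) by (eapply Rlt_le_trans; [exact Hst|]; eapply Rle_trans; [apply Rmin_l|apply Rmin_r]).
  assert (s3 : Rabs (s - t) < d3) by (eapply Rlt_le_trans; [exact Hst|]; eapply Rle_trans; [apply Rmin_r|apply Rmin_l]).
  assert (s4 : Rabs (s - t) < d4) by (eapply Rlt_le_trans; [exact Hst|]; eapply Rle_trans; apply Rmin_r).
  eapply Rle_trans; [apply sub_addadd|].
  pose proof (comp_close (D1 s) (D1 t) (g2 s) (g2 t) eta eta kd1 k2 BD1 kd1p Hkd1 Hk2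
    (Rlt_le _ _ Heta) (Hd1 s Hs s1) (Hd4 s Hs s4) x) as E1.
  pose proof (comp_close (g1 s) (g1 t) (D2 s) (D2 t) eta eta k1 kd2 B1 k1p Hk1 Hkd2
    (Rlt_le _ _ Heta) (Hd3 s Hs s3) (Hd2 s Hs s2) x) as E2.
  pose proof (nm_ge0 x) as N.
  assert (C : (eta * (k2 + eta) + kd1 * eta) + (eta * (kd2 + eta) + k1 * eta) <= eps)
    by (unfold M in HetaM; nra).
  assert (((eta * (k2 + eta) + kd1 * eta) + (eta * (kd2 + eta) + k1 * eta)) * nm x <= eps * nm x)
    by (apply Rmult_le_compat_r; lra).
  nra.
Qed.

Lemma in_K_ext J (A B : H -> H) : (forall x, A x = B x) -> in_K H J A -> in_K H J B.
Proof.
  intros E K. assert (B = A) by (apply functional_extensionality; intro; symmetry; auto).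
  subst; auto.
Qed.

Lemma K_prod J (g1 g1i A1 A2 : H -> H) : bounded_op H J ->
  bounded_op H g1 -> is_inverse H g1 g1i ->
  (forall x y, inn (J (g1 x)) (g1 y) = inn (J x) y) ->
  in_K H J A1 -> in_K H J A2 ->
  in_K H J (fun x => add (A1 x) (g1 (A2 (g1i x)))).
Proof.
  intros HJ Bg [Bgi [Hl Hr]] Sp [BA1 [S1 P1]] [BA2 [S2 P2]].
  assert (spo : forall w v, inn (opp (J (g1 w))) (g1 v) = inn (opp (J w)) v).
  { intros w v. rewrite !inner_opp_l, Sp. reflexivity. }
  split; [|split].
  - apply bounded_add; auto. apply bounded_comp; auto. apply bounded_comp; auto.
  - intros x y. rewrite (lin_add _ HJ), vopp_add, inner_add, inner_add_r. f_equal; [apply S1|].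
    transitivity (inn (opp (J (g1 (A2 (g1i x))))) (g1 (g1i y))); [rewrite Hr; reflexivity|].
    rewrite spo, S2, <- Sp, Hr. reflexivity.
  - intros x Hx. assert (Hx' : g1i x <> zero).
    { intro E. apply Hx. rewrite <- (Hr x), E. apply lin_zero; auto. }
    destruct (P1 x Hx) as [I1 R1]. destruct (P2 _ Hx') as [I2 R2].
    rewrite (lin_add _ HJ), vopp_add, inner_add.
    assert (E : inn (opp (J (g1 (A2 (g1i x))))) x = inn (opp (J (A2 (g1i x)))) (g1i x)).
    { rewrite <- (spo (A2 (g1i x)) (g1i x)), Hr. reflexivity. }
    rewrite E. unfold Cadd, Cim, Cre in *; simpl. split; lra.
Qed.

Lemma Sp_prod J M1 M2 : in_Sp H J M1 -> in_Sp H J M2 -> in_Sp H J (fun x => M1 (M2 x)).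
Proof.
  intros [[B1 [M1i [Bi1 [L1 R1]]]] S1] [[B2 [M2i [Bi2 [L2 R2]]]] S2].
  split.
  - split; [apply bounded_comp; auto|]. exists (fun x => M2i (M1i x)).
    split; [apply bounded_comp; auto|]. split; intro x; [rewrite L1, L2|rewrite R2, R1]; reflexivity.
  - intros x y. rewrite S1, S2. reflexivity.
Qed.

End Alg.

Theorem lemma2p2 (H : ComplexHilbertSpace) (J : H -> H)
  (HJb : bounded_op H J) (HJi : forall x y, J x = J y -> x = y)
  (HJs : skew_adjoint H J)
  (a b : R) (Hab : a < b) (g1 g2 : R -> H -> H) :
  positive_path H J a b g1 -> positive_path H J a b g2 ->
  positive_path H J a b (fun t x => g1 t (g2 t x)).
Proof.
  intros [D1 [[Sp1 [Bd1 [Dv1 Ct1]]] K1]] [D2 [[Sp2 [Bd2 [Dv2 Ct2]]] K2]].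
  assert (Bd : forall t, a <= t <= b -> bounded_op H (g1 t) /\ bounded_op H (g2 t) /\
     bounded_op H (D1 t) /\ bounded_op H (D2 t)).
  { intros t Ht. split; [exact (proj1 (proj1 (Sp1 t Ht)))|].
    split; [exact (proj1 (proj1 (Sp2 t Ht)))|]. auto. }
  exists (fun t x => vadd H (D1 t (g2 t x)) (g1 t (D2 t x))).
  split; [split; [|split; [|split]]|].
  - intros t Ht. apply Sp_prod; auto.
  - intros t Ht. destruct (Bd t Ht) as [B1 [B2 [BD1 BD2]]].
    apply bounded_add; apply bounded_comp; auto.
  - apply prod_deriv; auto.
  - apply prod_cont; auto.
  - intros t Ht Ginv [_ [GL GR]].
    destruct (Sp1 t Ht) as [[Bg1 [g1i Hg1i]] Sym1].
    destruct (Sp2 t Ht) as [[Bg2 [g2i Hg2i]] Sym2].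
    pose proof (K1 t Ht g1i Hg1i) as KA1. pose proof (K2 t Ht g2i Hg2i) as KA2.
    pose proof (K_prod H J (g1 t) g1i _ _ HJb Bg1 Hg1i Sym1 KA1 KA2) as KP.
    refine (in_K_ext H J _ _ _ KP). intro x. cbv beta.
    destruct Hg1i as [_ [L1 R1]]. destruct Hg2i as [_ [L2 R2]].
    assert (E : Ginv x = g2i (g1i x)).
    { transitivity (Ginv (g1 t (g2 t (g2i (g1i x))))).
      - rewrite R2, R1. reflexivity.
      - apply GL. }
    rewrite E, R2. reflexivity.
Qed.
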